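(* Consider any economy (in the setting described in the context, so in particular every market $\mathcal{M}(\theta)$, $\theta\in\Theta$, has a unique stable matching). Then there exists a Bayesian Nash equilibrium with truthfully reporting firms, in which every worker uses a weakly undominated strategy, whose outcome in each state $\theta$ is the unique stable matching (for the true preferences) of $\mathcal{M}(\theta)$.
   Context: Matching market: $\mathcal{M}=(F,W,U)$ with finite firms $F=\{f_i\}_{i\in[m]}$, finite workers $W=\{w_j\}_{j\in[n]}$, and utilities $u^f_{ij}$ (firm $f_i$ from worker $w_j$) and $u^w_{ij}$ (worker $w_j$ from firm $f_i$); being unmatched gives utility $0$; all preferences are strict and all firm–worker pairs are mutually acceptable (all match utilities are $>0$). A matching is stable if no agent is matched to an unacceptable partner and no firm–worker pair both strictly prefer each other to their assigned partners. An economy is $\mathcal{E}=(F,W,\{U(\theta)\}_{\theta\in\Theta},\Theta,\Psi)$ with finite state set $\Theta$, full-support prior $\Psi$, and market $\mathcal{M}(\theta)=(F,W,U(\theta))$ in state $\theta$; workers' utilities do not depend on the state ($u^w_{ij}(\theta)=u^w_{ij}(\theta')$ for all $\theta,\theta'$), while firms' utilities may. Standing assumption: each market $\mathcal{M}(\theta)$ has a unique stable matching. Game: a state $\theta$ is drawn according to $\Psi$; firms observe $\theta$ (and their utilities in $\theta$); each worker knows only his own (state-independent) preferences. All agents simultaneously submit rank-ordered lists of partners they declare acceptable, and the firm-proposing Deferred Acceptance algorithm is run on the reported lists. Firms are assumed to report truthfully; a worker's strategy is a single rank-ordered list, and a Bayesian Nash equilibrium (BNE) is a profile in which each worker's list maximizes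 his expected utility (under $\Psi$) given the others' strategies. A worker's strategy is weakly dominated if another list gives him weakly higher utility in every state against every profile of others' reports and strictly higher utility in some case. The outcome of a BNE is the matching it produces in each state. *)

(* Defs.v *)
From mathcomp Require Import all_boot all_order all_algebra.
Set Implicit Arguments. Unset Strict Implicit. Unset Printing Implicit Defensive.
Import Order.TTheory GRing.Theory Num.Theory.

(* Firms are 'I_m, workers are 'I_n.  A matching is recorded from the
   workers' side: mu w = Some f (w matched to f) or None (w unmatched). *)
Definition matching (m n : nat) := {ffun 'I_n -> option 'I_m}.

(* LF f : firm f's reported rank-ordered list of acceptable workers.
   LW w : worker w's reported rank-ordered list of acceptable firms
          (earlier = better).
   State: ptr f = number of workers (from the top of LF f) that have
   rejected f so far; f currently proposes to the (ptr f)-th entry. *)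

Definition proposes (m n : nat) (LF : 'I_m -> seq 'I_n) (ptr : 'I_m -> nat)
  (f : 'I_m) (w : 'I_n) : bool :=
  onth (LF f) (ptr f) == Some w.

Definition held (m n : nat) (LF : 'I_m -> seq 'I_n) (LW : 'I_n -> seq 'I_m)
  (ptr : 'I_m -> nat) (w : 'I_n) : option 'I_m :=
  [pick f | [&& proposes LF ptr f w, f \in LW w &
     [forall g, (proposes LF ptr g w && (g \in LW w)) ==>
                (index f (LW w) <= index g (LW w))%N]]].

Definition rejected (m n : nat) (LF : 'I_m -> seq 'I_n) (LW : 'I_n -> seq 'I_m)
  (ptr : 'I_m -> nat) (f : 'I_m) : bool :=
  if onth (LF f) (ptr f) is Some w then held LF LW ptr w != Some f else false.

Definition da_step (m n : nat) (LF : 'I_m -> seq 'I_n) (LW : 'I_n -> seq 'I_m)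
  (ptr : 'I_m -> nat) : 'I_m -> nat :=
  fun f => if rejected LF LW ptr f then (ptr f).+1 else ptr f.

(* Each non-final round increases \sum_f ptr f, which is bounded by
   \sum_f size (LF f); after that many rounds (+1) the algorithm has
   stopped (a round without rejections is a fixpoint of da_step). *)
Definition da_ptr (m n : nat) (LF : 'I_m -> seq 'I_n) (LW : 'I_n -> seq 'I_m)
  : 'I_m -> nat :=
  iter (\sum_(f < m) size (LF f)).+1 (da_step LF LW) (fun _ => 0%N).

Definition DA (m n : nat) (LF : 'I_m -> seq 'I_n) (LW : 'I_n -> seq 'I_m)
  : matching m n :=
  [ffun w => held LF LW (da_ptr LF LW) w].

Local Open Scope ring_scope.

(* uf f w : utility of firm f from worker w; uw f w : utility of worker w
   from firm f; being unmatched gives 0. *)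
Definition worker_util (R : numDomainType) (m n : nat) (uw : 'I_m -> 'I_n -> R)
  (mu : matching m n) (w : 'I_n) : R :=
  if mu w is Some f then uw f w else 0.

Definition firm_util (R : numDomainType) (m n : nat) (uf : 'I_m -> 'I_n -> R)
  (mu : matching m n) (f : 'I_m) : R :=
  if [pick w | mu w == Some f] is Some w then uf f w else 0.

Definition is_matching (m n : nat) (mu : matching m n) : Prop :=
  forall w1 w2 f, mu w1 = Some f -> mu w2 = Some f -> w1 = w2.

Definition stable (R : numDomainType) (m n : nat)
  (uf : 'I_m -> 'I_n -> R) (uw : 'I_m -> 'I_n -> R) (mu : matching m n) : Prop :=
  [/\ is_matching mu,
      (forall w f, mu w = Some f -> 0 < uw f w /\ 0 < uf f w) &
      ~ (exists f w, worker_util uw mu w < uw f w /\ firm_util uf mu f < uf f w)].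

(* truthful rank-ordered list of a firm: all workers (all are acceptable),
   in decreasing order of the firm's utility *)
Definition truthful_firm_lists (R : numDomainType) (m n : nat)
  (uf : 'I_m -> 'I_n -> R) : 'I_m -> seq 'I_n :=
  fun f => sort (fun w1 w2 => uf f w2 <= uf f w1) (enum 'I_n).

(* a worker strategy is a single (duplicate-free) list of firms *)
Definition upd (m n : nat) (s : 'I_n -> seq 'I_m) (w : 'I_n) (l : seq 'I_m)
  : 'I_n -> seq 'I_m :=
  fun w' => if w' == w then l else s w'.

Definition outcome_util (R : numDomainType) (m n : nat)
  (uf : 'I_m -> 'I_n -> R) (uw : 'I_m -> 'I_n -> R)
  (s : 'I_n -> seq 'I_m) (w : 'I_n) : R :=
  worker_util uw (DA (truthful_firm_lists uf) s) w.

Definition expected_util (R : numDomainType) (m n : nat) (Theta : finType)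
  (Psi : Theta -> R) (uf : Theta -> 'I_m -> 'I_n -> R) (uw : 'I_m -> 'I_n -> R)
  (s : 'I_n -> seq 'I_m) (w : 'I_n) : R :=
  \sum_(th : Theta) Psi th * outcome_util (uf th) uw s w.

Definition BNE (R : numDomainType) (m n : nat) (Theta : finType)
  (Psi : Theta -> R) (uf : Theta -> 'I_m -> 'I_n -> R) (uw : 'I_m -> 'I_n -> R)
  (s : 'I_n -> seq 'I_m) : Prop :=
  forall (w : 'I_n) (l : seq 'I_m), uniq l ->
    expected_util Psi uf uw (upd s w l) w <= expected_util Psi uf uw s w.

Definition weakly_dominated (R : numDomainType) (m n : nat) (Theta : finType)
  (uf : Theta -> 'I_m -> 'I_n -> R) (uw : 'I_m -> 'I_n -> R)
  (w : 'I_n) (l : seq 'I_m) : Prop :=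
  exists l' : seq 'I_m, [/\ uniq l',
    (forall (th : Theta) (t : 'I_n -> seq 'I_m), (forall w', uniq (t w')) ->
       outcome_util (uf th) uw (upd t w l) w <= outcome_util (uf th) uw (upd t w l') w) &
    (exists (th : Theta) (t : 'I_n -> seq 'I_m), (forall w', uniq (t w')) /\
       outcome_util (uf th) uw (upd t w l) w < outcome_util (uf th) uw (upd t w l') w)].

(* Main.v *)
Require Import Defs.
From mathcomp Require Import all_boot all_order all_algebra.
From Stdlib Require Import FunctionalExtensionality.
Import Order.TTheory GRing.Theory Num.Theory.
Set Implicit Arguments. Unset Strict Implicit. Unset Printing Implicit Defensive.

Definition pos (m n : nat) (LF : 'I_m -> seq 'I_n) (nu : matching m n) (g : 'I_m) : nat :=
  if [pick z | nu z == Some g] is Some z then index z (LF g) else size (LF g).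
Definition wpref (m n : nat) (LW : 'I_n -> seq 'I_m) (nu : matching m n) (x : 'I_n) (g : 'I_m) : bool :=
  if nu x is Some h then (index g (LW x) < index h (LW x))%N else true.
Definition stableL (m n : nat) (LF : 'I_m -> seq 'I_n) (LW : 'I_n -> seq 'I_m) (nu : matching m n) : Prop :=
  [/\ forall x1 x2 g, nu x1 = Some g -> nu x2 = Some g -> x1 = x2,
      forall x g, nu x = Some g -> g \in LW x /\ x \in LF g &
      forall g x, x \in LF g -> g \in LW x -> (index x (LF g) < pos LF nu g)%N -> wpref LW nu x g -> False].

Lemma onth_nthS (T : Type) (x0 : T) s i : (i < size s)%N -> onth s i = Some (nth x0 s i).
Proof. by move=> Hi; rewrite onthE (nth_map x0). Qed.

Lemma onth_lt (T : Type) (s : seq T) i x : onth s i = Some x -> (i < size s)%N.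
Proof. by move=> E; rewrite -onthTE E. Qed.

Lemma onth_index (T : eqType) (s : seq T) i x : uniq s -> onth s i = Some x -> index x s = i.
Proof.
move=> U E; have Hi := onth_lt E; have <- := @onth_nth _ x x s i E.
exact: index_uniq.
Qed.

Lemma onth_mem (T : eqType) (s : seq T) i x : onth s i = Some x -> x \in s.
Proof. move=> E; have Hi := onth_lt E; have <- := @onth_nth _ x x s i E; exact: mem_nth. Qed.

Lemma index_lt_neq (T : eqType) (s : seq T) a b : a \in s -> a != b ->
  (index a s <= index b s)%N -> (index a s < index b s)%N.
Proof.
move=> Ha Hab; rewrite leq_eqVlt => /orP[/eqP E|//].
by move: Hab; rewrite -(nth_index a Ha) E nth_index ?eqxx // -index_mem -E index_mem.
Qed.

Section DAtheory.
Variables (m n : nat) (LF : 'I_m -> seq 'I_n) (LW : 'I_n -> seq 'I_m).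
Hypothesis HLF : forall f, uniq (LF f).

Lemma heldP ptr w f : held LF LW ptr w = Some f ->
  [/\ proposes LF ptr f w, f \in LW w &
     forall g, proposes LF ptr g w -> g \in LW w -> (index f (LW w) <= index g (LW w))%N].
Proof.
rewrite /held; case: pickP => // h /and3P[H1 H2 /forallP H3] [<-]; split=> // g Pg Ig.
by move: (H3 g); rewrite Pg Ig.
Qed.

Lemma held_exists ptr w g : proposes LF ptr g w -> g \in LW w ->
  exists h, held LF LW ptr w = Some h /\ (index h (LW w) <= index g (LW w))%N.
Proof.
move=> Pg Ig; case E: (held LF LW ptr w) => [h|].
  by exists h; split => //; case/heldP: E => _ _; apply.
move: E; rewrite /held; case: pickP => // H _.
pose P := fun f => proposes LF ptr f w && (f \in LW w).
have Pg' : P g by rewrite /P Pg Ig.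
case: (arg_minnP (fun f => index f (LW w)) Pg') => k /andP[Pk Ik] Hmin.
move: (H k); rewrite Pk Ik /=; move/negP; elim; apply/forallP => j.
by apply/implyP => Pj; apply: Hmin.
Qed.

Lemma proposes_onth ptr f w : proposes LF ptr f w = (onth (LF f) (ptr f) == Some w).
Proof. by []. Qed.

Lemma held_mono ptr w g : held LF LW ptr w = Some g ->
  exists h, held LF LW (da_step LF LW ptr) w = Some h /\ (index h (LW w) <= index g (LW w))%N.
Proof.
move=> Hg; case/heldP: (Hg) => Pg Ig _.
have Hnr : da_step LF LW ptr g = ptr g.
  by rewrite /da_step /rejected; move: Pg; rewrite /proposes => /eqP ->; rewrite Hg eqxx.
apply: held_exists => //; by rewrite /proposes Hnr.
Qed.

Definition itp k := iter k (da_step LF LW) (fun _ => 0%N).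

Lemma rejected_lt ptr f : rejected LF LW ptr f -> (ptr f < size (LF f))%N.
Proof.
rewrite /rejected; case E: onth => [x|] // _.
by rewrite -onthTE E.
Qed.

Lemma da_step_sum ptr : (\sum_(f < m) da_step LF LW ptr f = \sum_(f < m) ptr f + \sum_(f < m) (rejected LF LW ptr f : nat))%N.
Proof.
rewrite -big_split /=; apply: eq_bigr => f _; rewrite /da_step.
by case: (rejected _ _ _ _); rewrite ?addn1 ?addn0.
Qed.

Lemma itp_le k f : (itp k f <= size (LF f))%N.
Proof.
elim: k f => [|k IH] f //=.
rewrite /itp /= /da_step -/(itp k); case E: rejected => //.
exact: rejected_lt E.
Qed.

Lemma itp_fix_or k : (forall f, ~~ rejected LF LW (itp k) f) \/ (k <= \sum_(f < m) itp k f)%N.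
Proof.
elim: k => [|k [IH|IH]]; first by right.
- left => f.
  have -> : itp k.+1 = itp k.
    apply: functional_extensionality => g; rewrite /itp /= -/(itp k) /da_step.
    by move: (IH g); case: rejected.
  exact: IH.
- case: (boolP [exists f, rejected LF LW (itp k) f]) => [/existsP[f Hf]|Hn].
    right; rewrite /itp /= -/(itp k) da_step_sum.
    have HR : (0 < \sum_(g < m) (rejected LF LW (itp k) g : nat))%N.
      by rewrite (bigD1 f) //= Hf.
    by rewrite -addn1 leq_add.
  left => f.
  have -> : itp k.+1 = itp k.
    apply: functional_extensionality => g; rewrite /itp /= -/(itp k) /da_step.
    by move/existsPn: Hn => /(_ g) /negbTE ->.
  by move/existsPn: Hn.
Qed.

Lemma da_fix f : ~~ rejected LF LW (da_ptr LF LW) f.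
Proof.
case: (itp_fix_or (\sum_(f < m) size (LF f)).+1) => [H|H]; first exact: H.
exfalso; move: H; rewrite /itp -/(da_ptr LF LW) ltnNge => /negP; apply.
rewrite -/(da_ptr LF LW); apply: leq_sum => g _.
exact: (itp_le (\sum_(f < m) size (LF f)).+1 g).
Qed.

Lemma da_ptr_le f : (da_ptr LF LW f <= size (LF f))%N.
Proof. exact: (itp_le (\sum_(f < m) size (LF f)).+1 f). Qed.

Definition Inv ptr := forall f x, (index x (LF f) < ptr f)%N -> f \in LW x ->
  exists g, held LF LW ptr x = Some g /\ (index g (LW x) < index f (LW x))%N.

Lemma Inv_step ptr : Inv ptr -> Inv (da_step LF LW ptr).
Proof.
move=> I f x; rewrite /da_step; case R: (rejected LF LW ptr f) => Hx Ix.
- rewrite ltnS leq_eqVlt in Hx; case/orP: Hx => Hx.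
  + have Hlt := rejected_lt R.
    have Hxm : x \in LF f by rewrite -index_mem (eqP Hx).
    have Eo : onth (LF f) (ptr f) = Some x by rewrite -(eqP Hx) (onth_nthS x) ?index_mem // nth_index.
    move: R; rewrite /rejected Eo => Hn.
    have [h [Hh Hle]] := held_exists (ptr := ptr) (w := x) (g := f) (introT eqP Eo) Ix.
    have Hhf : h != f by apply/eqP => E; move: Hn; rewrite Hh E eqxx.
    have Hhm : h \in LW x by case/heldP: Hh.
    have Hlt2 := index_lt_neq Hhm Hhf Hle.
    have [h' [Hh' Hle']] := held_mono Hh.
    by exists h'; split => //; apply: leq_ltn_trans Hlt2.
  + have [g [Hg Hlt]] := I f x Hx Ix.
    have [h' [Hh' Hle']] := held_mono Hg.
    by exists h'; split => //; apply: leq_ltn_trans Hlt.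
- have [g [Hg Hlt]] := I f x Hx Ix.
  have [h' [Hh' Hle']] := held_mono Hg.
  by exists h'; split => //; apply: leq_ltn_trans Hlt.
Qed.

Lemma Inv_itp k : Inv (itp k).
Proof. elim: k => [|k IH] //; by apply: Inv_step. Qed.

Lemma Inv_da : Inv (da_ptr LF LW).
Proof. exact: Inv_itp. Qed.

Lemma DAE x : DA LF LW x = held LF LW (da_ptr LF LW) x.
Proof. by rewrite /DA ffunE. Qed.

Lemma DA_some x f : DA LF LW x = Some f -> onth (LF f) (da_ptr LF LW f) = Some x /\ f \in LW x.
Proof. by rewrite DAE => /heldP [/eqP H1 H2 _]. Qed.

Lemma DA_of_onth x f : onth (LF f) (da_ptr LF LW f) = Some x -> DA LF LW x = Some f.
Proof.
move=> E; have := da_fix f; rewrite /rejected E negbK => /eqP.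
by rewrite DAE.
Qed.

Lemma pos_DA f : pos LF (DA LF LW) f = da_ptr LF LW f.
Proof.
rewrite /pos; case: pickP => [z /eqP Hz | H].
  by have [E _] := DA_some Hz; rewrite (onth_index (HLF f) E).
apply/eqP; rewrite eqn_leq da_ptr_le andbT leqNgt; apply/negP => Hlt.
case E: (onth (LF f) (da_ptr LF LW f)) => [y|]; last by move: Hlt; rewrite -onthTE E.
by have := H y; rewrite (DA_of_onth E) eqxx.
Qed.

Lemma DA_stable : stableL LF LW (DA LF LW).
Proof.
split.
- move=> x1 x2 g /DA_some[E1 _] /DA_some[E2 _]; by move: E1; rewrite E2 => -[].
- move=> x g /DA_some[E1 E2]; split => //; exact: onth_mem E1.
- move=> g x Hx Hg; rewrite pos_DA => Hlt.
  have [h [Hh Hlt2]] := Inv_da Hlt Hg.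
  by rewrite /wpref DAE Hh ltnNge (ltnW Hlt2).
Qed.

Lemma pos_partner (nu : matching m n) g z :
  (forall x1 x2 g, nu x1 = Some g -> nu x2 = Some g -> x1 = x2) ->
  nu z = Some g -> pos LF nu g = index z (LF g).
Proof.
move=> Hm Hz; rewrite /pos; case: pickP => [z' /eqP Hz'|H]; first by rewrite (Hm _ _ _ Hz' Hz).
by have := H z; rewrite Hz eqxx.
Qed.

Lemma pos_lt_partner (nu : matching m n) h x :
  (forall x1 x2 g, nu x1 = Some g -> nu x2 = Some g -> x1 = x2) ->
  x \in LF h -> nu x != Some h -> (index x (LF h) <= pos LF nu h)%N ->
  (index x (LF h) < pos LF nu h)%N.
Proof.
move=> Hm Hx Hn; rewrite /pos; case: pickP => [z /eqP Hz|H]; last by rewrite index_mem.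
apply: index_lt_neq => //; apply/eqP => E; move: Hn; by rewrite E Hz eqxx.
Qed.

Definition Jinv (LW2 : 'I_n -> seq 'I_m) (nu : matching m n) w0 ptr :=
  (held LF LW ptr w0 != None /\ LW w0 != LW2 w0) \/ (forall g, (ptr g <= pos LF nu g)%N).

Lemma Jinv_step LW2 nu w0 ptr : stableL LF LW2 nu -> (forall x, LW x != LW2 x -> x = w0) ->
  (forall g, nu w0 = Some g -> g \in LW w0) ->
  Jinv LW2 nu w0 ptr -> Jinv LW2 nu w0 (da_step LF LW ptr).
Proof.
move=> [Hm HIR Hnb] H1 H2 [[Hh Hne]|H].
  left; split => //; case E: (held LF LW ptr w0) Hh => [g|] // _.
  by have [h' [-> _]] := held_mono E.
case: (boolP ((held LF LW ptr w0 != None) && (LW w0 != LW2 w0))) => [/andP[Hh Hne]|Hc].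
  left; split => //; case E: (held LF LW ptr w0) Hh => [g|] // _.
  by have [h' [-> _]] := held_mono E.
right => g; rewrite /da_step; case R: (rejected LF LW ptr g); last exact: H g.
rewrite ltn_neqAle H andbT; apply/eqP => Heq.
have Hlt := rejected_lt R.
move: R; rewrite /rejected; case Eo: onth => [x|] // R.
have Hix := onth_index (HLF g) Eo.
have Hnx : nu x = Some g.
  move: Heq; rewrite /pos; case: pickP => [z /eqP Hz|Hn] Heq; last by move: Hlt; rewrite Heq ltnn.
  have Hzm : z \in LF g by case: (HIR _ _ Hz).
  have Hxm : x \in LF g := onth_mem Eo.
  have -> : x = z by move: (index_inj x Hxm Hzm); rewrite /= Hix Heq => ->.
  exact: Hz.
have Hgx : g \in LW x.
  case: (boolP (LW x == LW2 x)) => [/eqP ->|Hd]; first by case: (HIR _ _ Hnx).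
  by move: (H1 _ Hd) => E; move: Hnx; rewrite E => /H2.
have [h [Hh Hle]] := held_exists (ptr := ptr) (w := x) (g := g) (introT eqP Eo) Hgx.
have Hhg : h != g by apply/eqP => E; move: R; rewrite Hh E eqxx.
case/heldP: (Hh) => /eqP Eh Hhm _.
have Hlt2 := index_lt_neq Hhm Hhg Hle.
case: (boolP (LW x == LW2 x)) => Heq2.
  have Hxh : x \in LF h := onth_mem Eh.
  have Hixh := onth_index (HLF h) Eh.
  have Hlt3 : (index x (LF h) < pos LF nu h)%N.
    apply: pos_lt_partner => //; first by rewrite Hnx; apply/eqP => -[] /eqP; rewrite eq_sym (negbTE Hhg).
    by rewrite Hixh H.
  apply: (Hnb h x Hxh _ Hlt3); first by rewrite -(eqP Heq2).
  by rewrite /wpref Hnx -(eqP Heq2).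
have Ex := H1 _ Heq2; subst x.
by move: Hc; rewrite Hh Heq2.
Qed.

Lemma firm_opt_gen LW2 nu w0 : stableL LF LW2 nu -> (forall x, LW x != LW2 x -> x = w0) ->
  (forall g, nu w0 = Some g -> g \in LW w0) ->
  (DA LF LW w0 != None /\ LW w0 != LW2 w0) \/ (forall g, (da_ptr LF LW g <= pos LF nu g)%N).
Proof.
move=> Hs H1 H2.
have: forall k, Jinv LW2 nu w0 (itp k).
  elim => [|k IH]; first by right.
  exact: Jinv_step.
move/(_ (\sum_(f < m) size (LF f)).+1); by rewrite /Jinv DAE.
Qed.

Lemma firm_opt nu : stableL LF LW nu -> forall g, (da_ptr LF LW g <= pos LF nu g)%N.
Proof.
move=> Hs; have [Hn|] := (boolP (n > 0)%N).
  have H1 : forall x, LW x != LW x -> x = Ordinal Hn by move=> x; rewrite eqxx.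
  have H2 : forall g, nu (Ordinal Hn) = Some g -> g \in LW (Ordinal Hn).
    by case: Hs => _ HIR _ g /HIR [].
  by have [[_ /eqP //]|//] := @firm_opt_gen LW nu (Ordinal Hn) Hs H1 H2.
rewrite -eqn0Ngt => /eqP n0 g.
rewrite /pos; case: pickP => [z _|]; first by move: (ltn_ord z); rewrite {2}n0.
move=> _; exact: da_ptr_le.
Qed.

End DAtheory.

Section DAmore.
Variables (m n : nat) (LF : 'I_m -> seq 'I_n).
Hypothesis HLF : forall f, uniq (LF f).

Definition capt (nu : matching m n) : 'I_n -> seq 'I_m :=
  fun y => if nu y is Some h then [:: h] else [::].

Lemma capt_in nu y h : h \in capt nu y -> nu y = Some h.
Proof. by rewrite /capt; case: (nu y) => [k|] //; rewrite inE => /eqP ->. Qed.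

Lemma updE (t : 'I_n -> seq 'I_m) w l y : upd t w l y = if y == w then l else t y.
Proof. by []. Qed.

Lemma capt_stable LW0 w L :
  stableL LF (upd (capt (DA LF (upd LW0 w L))) w L) (DA LF (upd LW0 w L)).
Proof.
have [Hm HIR Hnb] := DA_stable (upd LW0 w L) HLF.
split => //.
- move=> x g Hx; have [H1 H2] := HIR _ _ Hx; split => //.
  move: H1; rewrite !updE; case: eqP => // _ _.
  by rewrite /capt Hx mem_seq1.
- move=> g x Hx; rewrite updE; case: eqP => [Exw|Hxw] Hg.
    subst x => H1 H2; apply: (Hnb g w Hx); rewrite ?updE ?eqxx //.
    by move: H2; rewrite /wpref !updE eqxx.
  by move=> _; rewrite /wpref (capt_in Hg) ltnn.
Qed.

Lemma capture LW0 w L a : DA LF (upd LW0 w L) w = Some a ->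
  DA LF (upd (capt (DA LF (upd LW0 w L))) w L) w = Some a.
Proof.
set nu := DA LF (upd LW0 w L); set LW1 := upd (capt nu) w L => Ha.
have Hs : stableL LF LW1 nu by exact: capt_stable.
have [Hm HIR _] := Hs.
have Hopt := firm_opt HLF Hs a.
rewrite (pos_partner LF Hm Ha) in Hopt.
have Hwa : w \in LF a by case: (HIR _ _ Ha).
have Hlt : (da_ptr LF LW1 a < size (LF a))%N by apply: leq_ltn_trans Hopt _; rewrite index_mem.
case E: (onth (LF a) (da_ptr LF LW1 a)) => [y|]; last by move: Hlt; rewrite -onthTE E.
have Hy := DA_of_onth E.
case: (eqVneq y w) => [<-//|Hyw].
have [_ HIR1 _] := DA_stable LW1 HLF.
have [Ha1 _] := HIR1 _ _ Hy.
move: Ha1; rewrite /LW1 updE (negbTE Hyw) => /capt_in Hy'.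
by move: Hyw; rewrite (Hm _ _ _ Hy' Ha) eqxx.
Qed.

Lemma DA_same_ptr LW1 LW2 x g : (forall f, da_ptr LF LW1 f = da_ptr LF LW2 f) ->
  DA LF LW1 x = Some g -> DA LF LW2 x = Some g.
Proof.
move=> H /DA_some [E _]; apply: (DA_of_onth); by rewrite -H.
Qed.

Lemma matched_card (nu : matching m n) :
  (forall x1 x2 g, nu x1 = Some g -> nu x2 = Some g -> x1 = x2) ->
  #|[set x | nu x != None]| = #|[set g | [exists x, nu x == Some g]]|.
Proof.
move=> Hm.
rewrite -(card_imset _ (@Some_inj _ : injective (@Some 'I_m))).
rewrite -(card_in_imset (f := fun x => nu x)); last first.
  move=> x1 x2; rewrite !inE; case E1: (nu x1) => [g1|] // _ _ E.
  by apply: (Hm _ _ g1) => //; rewrite -E.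
apply: eq_card => o; apply/imsetP/imsetP.
- case=> x; rewrite inE => Hx ->; case E: (nu x) Hx => [g|] // _.
  by exists g => //; rewrite inE; apply/existsP; exists x; rewrite E.
- case=> g; rewrite inE => /existsP [x /eqP Hx] ->.
  by exists x; rewrite ?inE Hx.
Qed.

End DAmore.

Local Open Scope ring_scope.

Lemma sorted_index (R : realFieldType) (T : eqType) (u : T -> R) (L : seq T) a b :
  sorted (fun x y => u y <= u x) L -> injective u -> a \in L -> b \in L ->
  (index a L < index b L)%N = (u b < u a).
Proof.
move=> Hs Hinj Ha Hb.
have tr : transitive (fun x y => u y <= u x) by move=> y x z H1 H2; exact: le_trans H2 H1.
case: (ltngtP (index a L) (index b L)) => H.
- have := sorted_ltn_nth tr a Hs; move/(_ (index a L) (index b L)).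
  rewrite !inE !index_mem => /(_ Ha Hb H); rewrite !nth_index // => Hle.
  symmetry; rewrite lt_neqAle Hle andbT; apply/eqP => E.
  by move: H; rewrite (Hinj _ _ E) ltnn.
- have := sorted_ltn_nth tr a Hs; move/(_ (index b L) (index a L)).
  rewrite !inE !index_mem => /(_ Hb Ha H); rewrite !nth_index // => Hle.
  by rewrite ltNge Hle.
- by move: (index_inj a Ha Hb H) => ->; rewrite ltxx.
Qed.

Definition twl (R : realFieldType) (m n : nat) (uw : 'I_m -> 'I_n -> R) (w : 'I_n) : seq 'I_m :=
  sort (fun f1 f2 => uw f2 w <= uw f1 w) (enum 'I_m).


Section Util.
Variables (R : realFieldType) (m n : nat) (uf : 'I_m -> 'I_n -> R) (uw : 'I_m -> 'I_n -> R).
Hypotheses (Hufp : forall f w, 0 < uf f w) (Huwp : forall f w, 0 < uw f w)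
  (Hufi : forall f, injective (uf f)) (Huwi : forall w, injective (fun f => uw f w)).

Local Notation LF := (truthful_firm_lists uf).

Lemma twl_uniq w : uniq (twl uw w).
Proof. by rewrite sort_uniq enum_uniq. Qed.
Lemma twl_mem w f : f \in twl uw w.
Proof. by rewrite mem_sort mem_enum. Qed.
Lemma twl_sorted w : sorted (fun f1 f2 => uw f2 w <= uw f1 w) (twl uw w).
Proof. apply: sort_sorted => x y; exact: le_total. Qed.
Lemma twl_index w a b : (index a (twl uw w) < index b (twl uw w))%N = (uw b w < uw a w).
Proof. apply: (sorted_index (u := fun f => uw f w)) => //; [exact: twl_sorted|exact: twl_mem|exact: twl_mem]. Qed.

Lemma LF_uniq f : uniq (LF f).
Proof. by rewrite sort_uniq enum_uniq. Qed.
Lemma LF_mem f w : w \in LF f.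
Proof. by rewrite mem_sort mem_enum. Qed.
Lemma LF_index f a b : (index a (LF f) < index b (LF f))%N = (uf f b < uf f a).
Proof.
apply: (sorted_index (u := uf f)) => //; try by rewrite mem_sort mem_enum.
apply: sort_sorted => x y; exact: le_total.
Qed.

Lemma worker_util_ge0 (nu : matching m n) x : 0 <= worker_util uw nu x.
Proof. rewrite /worker_util; case: (nu x) => // f; exact: ltW. Qed.

Lemma firm_util_lt (nu : matching m n) h x :
  firm_util uf nu h < uf h x -> (index x (LF h) < pos LF nu h)%N.
Proof.
rewrite /firm_util /pos; case: pickP => [z _|_] H; first by rewrite LF_index.
by rewrite index_mem LF_mem.
Qed.

Lemma util_stable LW (nu : matching m n) : stableL LF LW nu ->
  (forall x h, worker_util uw nu x < uw h x -> h \in LW x /\ wpref LW nu x h) ->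
  stable uf uw nu.
Proof.
move=> [Hm HIR Hnb] Htr; rewrite /stable /is_matching; split.
- exact: Hm.
- by move=> w f _; split; [exact: Huwp | exact: Hufp].
- case=> f [w [H1 H2]].
have [Hf Hp] := Htr _ _ H1.
exact: (Hnb f w (LF_mem f w) Hf (firm_util_lt H2) Hp).
Qed.

Lemma trans_truth LW (nu : matching m n) x h : LW x = twl uw x ->
  worker_util uw nu x < uw h x -> h \in LW x /\ wpref LW nu x h.
Proof.
move=> E; rewrite /worker_util /wpref E twl_mem; case: (nu x) => [g|] // H.
by rewrite twl_index.
Qed.

Lemma bne_state (Hu : forall mu1 mu2, stable uf uw mu1 -> stable uf uw mu2 -> mu1 = mu2) w l :
  worker_util uw (DA LF (upd (twl uw) w l)) w <= worker_util uw (DA LF (twl uw)) w.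
Proof.
have HLF := LF_uniq.
rewrite leNgt; apply/negP => Hgt.
set mu' := DA LF (upd (twl uw) w l) in Hgt.
set mu := DA LF (twl uw) in Hgt.
case E': (mu' w) => [f'|]; last first.
  by move: Hgt; rewrite {2}/worker_util E' ltNge worker_util_ge0.
set Tf := [seq g <- twl uw w | uw f' w <= uw g w].
set LWT := upd (twl uw) w Tf.
set nu := DA LF LWT.
have Hs' : stableL LF (upd (twl uw) w l) mu' by exact: DA_stable.
have [Hm' HIR' Hnb'] := Hs'.
have [Hmn HIRn Hnbn] : stableL LF LWT nu by exact: DA_stable.
have Hnw : nu w != None.
  apply/negP => /eqP Hnw0.
  have H1 : forall x, LWT x != upd (twl uw) w l x -> x = w.
    by move=> x; case: (eqVneq x w) => [//|Hxw]; rewrite /LWT !updE (negbTE Hxw) eqxx.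
  have H2 : forall g, mu' w = Some g -> g \in LWT w.
    by rewrite E' => g [<-]; rewrite /LWT updE eqxx mem_filter lexx twl_mem.
  case: (firm_opt_gen HLF Hs' H1 H2) => [[]|Hopt]; first by rewrite -/nu Hnw0 eqxx.
  have Fsub : [set g | [exists x, mu' x == Some g]] \subset [set g | [exists x, nu x == Some g]].
    apply/subsetP => g; rewrite !inE => /existsP [z /eqP Hz].
    have Hp := Hopt g; rewrite (pos_partner LF Hm' Hz) in Hp.
    have Hlt : (da_ptr LF LWT g < size (LF g))%N.
      by apply: leq_ltn_trans Hp _; rewrite index_mem LF_mem.
    case E: (onth (LF g) (da_ptr LF LWT g)) => [y|]; last by move: Hlt; rewrite -onthTE E.
    by apply/existsP; exists y; rewrite (DA_of_onth E).
  have Wsub : [set x | nu x != None] \proper [set x | mu' x != None].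
    apply/properP; split.
      apply/subsetP => x; rewrite !inE; case En: (nu x) => [h|] // _.
      apply/negP => /eqP Em.
      have Hxw : x != w by apply/eqP => Exw; move: En; rewrite Exw Hnw0.
      have [Eo _] := DA_some En.
      have Hix := onth_index (HLF h) Eo.
      have Hlt : (index x (LF h) < pos LF mu' h)%N.
        apply: (pos_lt_partner Hm' (LF_mem h x)); first by rewrite Em.
        by rewrite Hix Hopt.
      apply: (Hnb' h x (LF_mem h x) _ Hlt); last by rewrite /wpref Em.
      by rewrite updE (negbTE Hxw) twl_mem.
    by exists w; rewrite !inE ?E' ?Hnw0.
  have := proper_card Wsub; rewrite (matched_card Hmn) (matched_card Hm').
  by rewrite ltnNge (subset_leq_card Fsub).
case Eg: (nu w) Hnw => [g|] // _.
have Hg : g \in Tf by have := (HIRn w g Eg).1; rewrite /LWT updE eqxx.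
have Hgf : uw f' w <= uw g w by move: Hg; rewrite mem_filter => /andP[].
have Hnus : stable uf uw nu.
  apply: (util_stable (LW := LWT)) => // x h Hlt.
  case: (eqVneq x w) => [Exw|Hxw]; last by apply: trans_truth Hlt; rewrite /LWT updE (negbTE Hxw).
  subst x; move: Hlt; rewrite /worker_util Eg => Hlt.
  have Hh : h \in Tf by rewrite mem_filter twl_mem (le_trans Hgf (ltW Hlt)).
  rewrite /wpref Eg /LWT updE eqxx; split => //.
  rewrite (sorted_index (u := fun f => uw f w)) //.
  apply: sorted_filter; last exact: twl_sorted.
  by move=> y x z H1 H2; exact: le_trans H2 H1.
have Hmus : stable uf uw mu.
  apply: (util_stable (LW := twl uw)) => //; first exact: DA_stable.
  by move=> x h; apply: trans_truth.
have Eq := Hu _ _ Hnus Hmus.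
by move: Hgt; rewrite -/mu -Eq /worker_util Eg E' ltNge Hgf.
Qed.

Lemma capt_uniq (nu : matching m n) y : uniq (capt nu y).
Proof. by rewrite /capt; case: (nu y). Qed.

Lemma undom_state w l' t0 :
  (forall t : 'I_n -> seq 'I_m, (forall w', uniq (t w')) ->
     worker_util uw (DA LF (upd t w (twl uw w))) w <= worker_util uw (DA LF (upd t w l')) w) ->
  ~ (worker_util uw (DA LF (upd t0 w (twl uw w))) w < worker_util uw (DA LF (upd t0 w l')) w).
Proof.
have HLF := LF_uniq.
move=> Hi Hgt.
set T := twl uw w in Hi Hgt.
set muT := DA LF (upd t0 w T) in Hgt.
set mu' := DA LF (upd t0 w l') in Hgt.
have [HmT HIRT HnbT] : stableL LF (upd t0 w T) muT by exact: DA_stable.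
have [Hm' HIR' Hnb'] : stableL LF (upd t0 w l') mu' by exact: DA_stable.
case E': (mu' w) => [f'|]; last first.
  by move: Hgt; rewrite {2}/worker_util E' ltNge worker_util_ge0.
have S1 : stableL LF (upd t0 w T) mu'.
  split => //.
  - move=> x g Hx; have [H1 H2] := HIR' _ _ Hx; split => //.
    move: H1; rewrite !updE; case: eqP => // _ _; exact: twl_mem.
  - move=> g x Hx; rewrite updE; case: (eqVneq x w) => [Exw|Hxw] Hg Hlt Hwp; last first.
      apply: (Hnb' g x Hx); first by rewrite updE (negbTE Hxw).
        exact: Hlt.
      by move: Hwp; rewrite /wpref !updE (negbTE Hxw).
    subst x; move: Hwp; rewrite /wpref E' updE eqxx twl_index => Hwp.
    have C1 : DA LF (upd (capt mu') w l') w = Some f' by apply: capture.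
    have C2 : uw g w <= worker_util uw (DA LF (upd (capt mu') w T)) w.
      rewrite leNgt; apply/negP => Hlt2.
      have [Hm2 HIR2 Hnb2] := DA_stable (upd (capt mu') w T) HLF.
      apply: (Hnb2 g w (LF_mem g w)); first by rewrite updE eqxx twl_mem.
      + rewrite /pos; case: pickP => [z /eqP Hz|_]; last by rewrite index_mem LF_mem.
        have Hzw : z != w.
          by apply/eqP => Ez; move: Hz; rewrite Ez => Hz; move: Hlt2; rewrite /worker_util Hz ltxx.
        have [Hgz _] := HIR2 _ _ Hz; move: Hgz; rewrite updE (negbTE Hzw) => /capt_in Hz'.
        by rewrite -(pos_partner LF Hm' Hz').
      + move: Hlt2; rewrite /wpref /worker_util.
        case: (DA LF (upd (capt mu') w T) w) => [h|] // Hlt2.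
        by rewrite updE eqxx twl_index.
    have := Hi (capt mu') (capt_uniq mu').
    rewrite {2}/worker_util C1 => Hle.
    by move: (le_trans C2 Hle); rewrite leNgt Hwp.
have S2 : stableL LF (upd t0 w l') muT.
  case EaT: (muT w) => [a|]; last first.
    split => //.
    - move=> x g Hx; have [H1 H2] := HIRT _ _ Hx; split => //.
      have Hxw : x != w by apply/eqP => Exw; move: Hx; rewrite Exw EaT.
      by move: H1; rewrite !updE (negbTE Hxw).
    - move=> g x Hx; rewrite updE; case: (eqVneq x w) => [Exw|Hxw] Hg Hlt Hwp; last first.
        apply: (HnbT g x Hx); first by rewrite updE (negbTE Hxw).
          exact: Hlt.
        by move: Hwp; rewrite /wpref !updE (negbTE Hxw).
      subst x; apply: (HnbT g w Hx); first by rewrite updE eqxx twl_mem.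
        exact: Hlt.
      by rewrite /wpref EaT.
  set D3 := DA LF (upd (capt muT) w l').
  have C3 : DA LF (upd (capt muT) w T) w = Some a by apply: capture.
  have Hia := Hi (capt muT) (capt_uniq muT).
  rewrite {1}/worker_util C3 -/D3 in Hia.
  have [Hm3 HIR3 Hnb3] : stableL LF (upd (capt muT) w l') D3 by exact: DA_stable.
  case ED3 : (D3 w) Hia => [h|]; rewrite /worker_util ED3 => Hia; last first.
    by move: Hia; rewrite leNgt Huwp.
  have Hpref : forall k z, D3 w = Some k -> muT z = Some k -> z != w ->
      (index w (LF k) < index z (LF k))%N.
    move=> k z Hk Hz Hzw.
    have HD3z : D3 z = None.
      case E: (D3 z) => [k'|] //.
      have [Hk' _] := HIR3 _ _ E.
      move: Hk'; rewrite updE (negbTE Hzw) => /capt_in; rewrite Hz => -[Ekk]; subst k'.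
      by move: Hzw; rewrite (Hm3 _ _ _ E Hk) eqxx.
    apply: index_lt_neq; [exact: LF_mem | by rewrite eq_sym | ].
    rewrite leqNgt; apply/negP => Hlt.
    apply: (Hnb3 k z (LF_mem k z)).
    - by rewrite updE (negbTE Hzw) /capt Hz mem_seq1.
    - by rewrite (pos_partner LF Hm3 Hk).
    - by rewrite /wpref HD3z.
  have Eha : h = a.
    apply/eqP; apply/negP => Hha.
    have Hlt : uw a w < uw h w.
      rewrite lt_neqAle Hia andbT; apply/eqP => E.
      by move: Hha; rewrite (Huwi E) eqxx.
    apply: (HnbT h w (LF_mem h w)); first by rewrite updE eqxx twl_mem.
    - rewrite /pos; case: pickP => [z /eqP Hz|_]; last by rewrite index_mem LF_mem.
      case: (eqVneq z w) => [Ezw|Hzw].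
        by move: Hz; rewrite Ezw EaT => -[Eah]; move: Hha; rewrite Eah eqxx.
      exact: Hpref ED3 Hz Hzw.
    - by rewrite /wpref EaT updE eqxx twl_index.
  subst h.
  have Hal : a \in l' by have := (HIR3 _ _ ED3).1; rewrite updE eqxx.
  split => //.
  - move=> x g Hx; have [H1 H2] := HIRT _ _ Hx; split => //.
    case: (eqVneq x w) => [Exw|Hxw].
      by subst x; move: Hx; rewrite EaT => -[<-]; rewrite updE eqxx.
    by move: H1; rewrite !updE (negbTE Hxw).
  - move=> g x Hx; rewrite updE; case: (eqVneq x w) => [Exw|Hxw] Hg Hlt Hwp; last first.
      apply: (HnbT g x Hx); first by rewrite updE (negbTE Hxw).
        exact: Hlt.
      by move: Hwp; rewrite /wpref !updE (negbTE Hxw).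
    subst x; move: Hwp; rewrite /wpref EaT updE eqxx => Hwp.
    apply: (Hnb3 g w Hx); first by rewrite updE eqxx.
    + rewrite /pos; case: pickP => [z /eqP Hz|_]; last by rewrite index_mem.
      have Hzw : z != w.
        apply/eqP => Ez; move: Hz; rewrite Ez ED3 => -[Ega].
        by move: Hwp; rewrite Ega ltnn.
      have [Hgz _] := HIR3 _ _ Hz; move: Hgz; rewrite updE (negbTE Hzw) => /capt_in Hz'.
      by rewrite -(pos_partner LF HmT Hz').
    + by rewrite /wpref ED3 updE eqxx.
have O1 := firm_opt HLF S1.
have O2 := firm_opt HLF S2.
have Heq : forall g, da_ptr LF (upd t0 w l') g = da_ptr LF (upd t0 w T) g.
  move=> g; apply/eqP; rewrite eqn_leq.
  have := O1 g; have := O2 g.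
  by rewrite (pos_DA (upd t0 w l') HLF) (pos_DA (upd t0 w T) HLF) => -> ->.
have := DA_same_ptr Heq E'.
by rewrite -/muT => HT; move: Hgt; rewrite /worker_util HT E' ltxx.
Qed.

End Util.

Theorem proposition0 (R : realFieldType) (m n : nat) (Theta : finType)
  (Psi : Theta -> R) (uf : Theta -> 'I_m -> 'I_n -> R) (uw : 'I_m -> 'I_n -> R) :
  (forall th, 0 < Psi th) ->
  \sum_(th : Theta) Psi th = 1 ->
  (forall th f w, 0 < uf th f w) ->
  (forall f w, 0 < uw f w) ->
  (forall th f, injective (uf th f)) ->
  (forall w, injective (fun f => uw f w)) ->
  (forall th, exists! mu : matching m n, stable (uf th) uw mu) ->
  exists s : 'I_n -> seq 'I_m,
    [/\ (forall w, uniq (s w)),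
        BNE Psi uf uw s,
        (forall w, ~ weakly_dominated uf uw w (s w)) &
        (forall th, stable (uf th) uw (DA (truthful_firm_lists (uf th)) s))].
Proof.
move=> HPsi HPsum Hufp Huwp Hufi Huwi Huniq.
exists (twl uw); split.
- move=> w; exact: twl_uniq.
- move=> w l _; rewrite /expected_util; apply: ler_sum => th _.
  apply: ler_wpM2l; first exact: ltW.
  rewrite /outcome_util; apply: (@bne_state R m n (uf th) uw (Hufp th) Huwp (Hufi th) Huwi).
  move=> mu1 mu2 H1 H2; case: (Huniq th) => mu0 [_ Hu].
  by rewrite -(Hu _ H1) -(Hu _ H2).
- move=> w [l' [Hl' Hi [th [t [Ht Hlt]]]]].
  apply: (@undom_state R m n (uf th) uw Huwp Huwi w l' t _ Hlt).
  by move=> t1 Ht1; apply: Hi.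
- move=> th; apply: (@util_stable R m n (uf th) uw (Hufp th) Huwp (Hufi th) (twl uw)).
    exact: DA_stable (LF_uniq _).
  by move=> x h; apply: trans_truth.
Qed.
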